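(* Every open subspace of a $C$-selective space is $C$-selective.
   Context: All spaces are assumed $T_1$. For spaces $Y$, $X$, a map $\varphi:Y\to\mathcal P(X)\setminus\{\emptyset\}$ is lower semicontinuous (l.s.c.) if $\{y:\varphi(y)\cap U\neq\emptyset\}$ is open in $Y$ for every open $U\subseteq X$; a selection is a map $f:Y\to X$ with $f(y)\in\varphi(y)$ for all $y$. $X$ is $Y$-selective if every l.s.c. map from $Y$ to the nonempty closed subsets of $X$ has a continuous selection; $X$ is $C$-selective if it is $Y$-selective for every countable regular space $Y$. *)

(* Defs.v *)
From HB Require Import structures.
From mathcomp Require Import all_boot all_order all_algebra.
From mathcomp Require Import all_classical all_reals all_analysis.
Set Implicit Arguments. Unset Strict Implicit. Unset Printing Implicit Defensive.
Local Open Scope classical_set_scope.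

Definition lsc {Y X : topologicalType} (phi : Y -> set X) : Prop :=
  forall U : set X, open U -> open [set y | phi y `&` U !=set0].

Definition selective (Y X : topologicalType) : Prop :=
  forall phi : Y -> set X,
    (forall y, closed (phi y) /\ phi y !=set0) -> lsc phi ->
    exists f : Y -> X, continuous f /\ forall y, phi y (f y).

Definition C_selective (X : topologicalType) : Prop :=
  forall Y : topologicalType,
    countable [set: Y] -> @accessible_space Y -> @regular_space Y ->
    selective Y X.

(* Main.v *)
Require Import Defs.
From HB Require Import structures.
From mathcomp Require Import all_boot all_order all_algebra.
From mathcomp Require Import all_classical all_reals all_analysis.
Local Open Scope classical_set_scope.

Lemma val_open (X : topologicalType) (U : set X) (V : set X) :
  open V -> open ((@sval X (fun x => x \in U)) @^-1` V : set (set_type U)).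
Proof.
move=> oV.
have := @initial_continuous _ X (@set_val X U).
move/continuousP => /(_ V oV). exact.
Qed.

Lemma open_val (X : topologicalType) (U : set X) (W : set (set_type U)) :
  open W -> exists V, open V /\ W = sval @^-1` V.
Proof. move=> [V oV <-]. by exists V. Qed.

Lemma cont_lift (X : topologicalType) (U : set X) (Y : topologicalType)
  (f : Y -> set_type U) : continuous (sval \o f) -> continuous f.
Proof. move=> h. exact: (@continuous_comp_initial _ _ _ (@set_val X U)). Qed.

Lemma enum_of_countable (Y : Type) (y0 : Y) : countable [set: Y] ->
  exists e : nat -> Y, forall y, exists n, e n = y.
Proof.
move/countable_injP => [f finj].
have /choice [e eP] : forall n : nat, exists y : Y, (exists y', f y' = n) -> f y = n.
  move=> n; case: (pselect (exists y', f y' = n)) => [[y' h]|h].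
    by exists y' => _.
  by exists y0.
exists e => y; exists (f y).
apply: finj; rewrite ?in_setT //.
by apply: eP; exists y.
Qed.
Lemma reg_nbhs (Y : topologicalType) : regular_space Y ->
  forall (z : Y) (W : set Y), open W -> W z ->
  exists N, [/\ open N, N z & closure N `<=` W].
Proof.
move=> R z W oW Wz.
have : nbhs z W by apply: open_nbhs_nbhs.
move=> /R [A nA cAW].
exists (interior A); split => //; first exact: open_interior.
apply: subset_trans cAW; apply: closureS; exact: interior_subset.
Qed.

Section Clopen.
Variables (Y : topologicalType) (R : regular_space Y) (W : set Y) (oW : open W).

Definition Inv (p : set Y * set Y) :=
  [/\ open p.1, open p.2, closure p.1 `<=` W & closure p.1 `&` closure p.2 = set0].

Lemma step p z : Inv p -> exists q, [/\ Inv q, p.1 `<=` q.1, p.2 `<=` q.2 & (q.1 z \/ q.2 z)].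
Proof.
case: p => S T [/= oS oT cSW dST].
case: (pselect (closure S z)) => Sz.
- have Tz : ~ closure T z by move=> Tz; have : (closure S `&` closure T) z by []; rewrite dST.
  have [N [oN Nz cN]] := @reg_nbhs _ R _ _ (openI oW (closed_openC (@closed_closure _ T))) (conj (cSW _ Sz) Tz).
  exists (S `|` N, T); split => /=; [split => //=| by move=> x; left | by [] | by left; right].
  + exact: openU.
  + by rewrite closureU => x [/cSW//|/cN []].
  + rewrite closureU setIUl dST set0U; apply/seteqP; split => // x [/cN [_ +] ?]; done.
- have [N [oN Nz cN]] := @reg_nbhs _ R _ _ (closed_openC (@closed_closure _ S)) Sz.
  exists (S, T `|` N); split => /=; [split => //=| by [] | by move=> x; left | by right; right].
  + exact: openU.
  + rewrite closureU setIUr dST set0U; apply/seteqP; split => // x [? /cN]; done.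
Qed.

Lemma clopen_nbhs (e : nat -> Y) : (forall y, exists n, e n = y) ->
  forall y, W y -> exists C, [/\ open C, closed C, C y & C `<=` W].
Proof.
move=> eS y Wy.
have [V0 [oV0 V0y cV0]] := @reg_nbhs _ R _ _ oW Wy.
have : forall (p : set Y * set Y) (n : nat), exists q : set Y * set Y,
   Inv p -> [/\ Inv q, p.1 `<=` q.1, p.2 `<=` q.2 & (q.1 (e n) \/ q.2 (e n))].
  move=> p n; case: (pselect (Inv p)) => ip.
    by have [q ?] := step p (e n) ip; exists q.
  by exists p.
move=> H.
have [st stP] : exists st : set Y * set Y -> nat -> set Y * set Y, forall p n,
   Inv p -> [/\ Inv (st p n), p.1 `<=` (st p n).1, p.2 `<=` (st p n).2 &
             ((st p n).1 (e n) \/ (st p n).2 (e n))].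
  have /choice [f fP] : forall p, exists g : nat -> set Y * set Y, forall n,  Inv p -> [/\ Inv (g n), p.1 `<=` (g n).1, p.2 `<=` (g n).2 &
             ((g n).1 (e n) \/ (g n).2 (e n))].
    by move=> p; have [g gP] := choice (H p); exists g.
  by exists f.
pose s := fix s n := if n is m.+1 then st (s m) m else (V0, set0).
have sI : forall n, Inv (s n).
  elim => [|n IH] /=; last by case: (stP _ n IH).
  split => //=; [exact: open0 | by rewrite closure0 setI0].
have smono : forall m n, (m <= n)%N -> (s m).1 `<=` (s n).1 /\ (s m).2 `<=` (s n).2.
  move=> m; elim => [|n IH]; first by rewrite leqn0 => /eqP ->; split.
  rewrite leq_eqVlt => /orP [/eqP -> |/IH [h1 h2]]; first by split.
  by case: (stP (s n) n (sI n)) => _ a b _ /=; split; apply: subset_trans; eassumption.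
pose O := \bigcup_n (s n).1. pose Q := \bigcup_n (s n).2.
have oO : open O by apply: bigcup_open => n _; case: (sI n).
have oQ : open Q by apply: bigcup_open => n _; case: (sI n).
have OQ : O = ~` Q.
  apply/seteqP; split => x.
    move=> [m _ Ox] [k _ Qx].
    have [h1 _] := smono m (maxn m k) (leq_maxl _ _).
    have [_ h2] := smono k (maxn m k) (leq_maxr _ _).
    case: (sI (maxn m k)) => _ _ _ d.
    have : (closure (s (maxn m k)).1 `&` closure (s (maxn m k)).2) x.
      by split; apply: subset_closure; [apply: h1|apply: h2].
    by rewrite d.
  have [n <-] := eS x; move=> nQx.
  case: (stP (s n) n (sI n)) => _ _ _ [h|h].
    by rewrite /O; exists n.+1.
  by exfalso; apply: nQx; rewrite /Q; exists n.+1.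
exists O; split => //.
- by rewrite OQ; apply: open_closedC.
- by rewrite /O; exists 0%N.
- move=> x [n _ /subset_closure]; case: (sI n) => _ _ h _; exact: h.
Qed.
End Clopen.


Theorem mainTheorem12 (X : topologicalType) (U : set X) :
  @accessible_space X -> open U -> C_selective X ->
  C_selective (set_type U).
Proof.
move=> T1X oU CX Y cY T1Y RY phi phiP lscphi.
case: (pselect (exists y : Y, True)) => [[y0 _]|nY]; last first.
  have /choice [f fP] : forall y, exists b, phi y b by move=> y; case: (phiP y).
  exists f; split => // y; exfalso; apply: nY; by exists y.
have [e eS] := @enum_of_countable _ y0 cY.
have /choice [a aP] : forall n, exists b, phi (e n) b by move=> n; case: (phiP (e n)).
pose Psi n y : set X := if y == e n then [set sval (a n)] else closure (sval @` phi y).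
have /choice [g gP] : forall n, exists g : Y -> X, continuous g /\ forall y, Psi n y (g y).
  move=> n; apply: (CX Y cY T1Y RY (Psi n)).
  - move=> y; rewrite /Psi; case: eqP => _; split.
    + exact: accessible_closed_set1.
    + by exists (sval (a n)).
    + exact: closed_closure.
    + case: (phiP y) => _ [b pb]; exists (sval b); apply: subset_closure; by exists b.
  - move=> V oV.
    have oV' := @val_open _ U V oV.
    have cl y : closure (sval @` phi y) `&` V !=set0 <-> phi y `&` (sval @^-1` V) !=set0.
      split.
        move=> [x [cx Vx]].
        have : nbhs x V by apply: open_nbhs_nbhs.
        by move/cx => [_ [[b pb <-] Vb]]; exists b.
      move=> [b [pb Vb]]; exists (sval b); split => //; apply: subset_closure; by exists b.
    case: (pselect (V (sval (a n)))) => Va.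
      have -> : [set y | Psi n y `&` V !=set0] = [set y | phi y `&` (sval @^-1` V) !=set0].
        apply/seteqP; split => y /=; rewrite /Psi; case: eqP => [->|ne].
        * by move=> _; exists (a n).
        * by move/cl.
        * by move=> _; exists (sval (a n)).
        * by move/cl.
      exact: lscphi.
    have -> : [set y | Psi n y `&` V !=set0] =
        [set y | phi y `&` (sval @^-1` V) !=set0] `&` ~` [set e n].
      apply/seteqP; split => y /=; rewrite /Psi; case: eqP => [->|ne].
      * by move=> [x [-> Vx]].
      * by move/cl.
      * by move=> [_ []].
      * by move=> [/cl].
    apply: openI; first exact: lscphi.
    by rewrite openC; apply: accessible_closed_set1.
have Ue n : U (g n (e n)).
  have := (gP n).2 (e n); rewrite /Psi eqxx => ->; exact: set_valP.
have /choice [C CP] : forall n, exists C : set Y,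
    [/\ open C, closed C, C (e n) & C `<=` g n @^-1` U].
  move=> n; apply: (@clopen_nbhs _ RY _ _ _ eS) => //.
  exact: (continuousP _).1 (gP n).1 _ oU.
have key n y : C n y -> exists b, phi y b /\ sval b = g n y.
  move=> Cy; have Ug : U (g n y) by case: (CP n) => _ _ _ /(_ y Cy).
  have := (gP n).2 y; rewrite /Psi; case: eqP => [-> ->|ne cl].
    by exists (a n).
  have Um : g n y \in U by apply/mem_set.
  exists (exist (fun x => x \in U) (g n y) Um); split => //.
  apply: contrapT => npb.
  have : open (~` phi y) by rewrite openC; case: (phiP y).
  move/open_val => [V [oV eV]].
  have Vg : V (g n y).
    have : (~` phi y) (exist (fun x => x \in U) (g n y) Um) by [].
    by rewrite eV.
  have := cl V (open_nbhs_nbhs (conj oV Vg)) => -[_ [[c pc <-] Vc]].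
  have : (~` phi y) c by rewrite eV.
  by [].
have minex y : exists m, C m y /\ forall j, (j < m)%N -> ~ C j y.
  have [n en] := eS y.
  have ex : exists n, `[< C n y >].
    by exists n; apply/asboolP; rewrite -en; case: (CP n).
  case: (ex_minnP ex) => m /asboolP Cm mmin; exists m; split => // j jm Cj.
  by have := mmin j (asboolT Cj); rewrite leqNgt jm.
have /choice [f fP] : forall y, exists b, phi y b /\ exists m,
    [/\ C m y, forall j, (j < m)%N -> ~ C j y & sval b = g m y].
  move=> y; have [m [Cm mmin]] := minex y.
  have [b [pb eb]] := key m y Cm.
  by exists b; split => //; exists m; split.
exists f; split; last by move=> y; case: (fP y).
apply: cont_lift => y.
have [_ [m [Cm mmin eb]]] := fP y.
pose A := fix A k := if k is k'.+1 then A k' `|` C k' else set0.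
have Acl k : closed (A k).
  elim: k => [|k IH] /=; first exact: closed0.
  by apply: closedU => //; case: (CP k).
have AP k x : A k x -> exists j, (j < k)%N /\ C j x.
  elim: k => [|k IH] //= [/IH [j [jk Cj]]|Ck].
    by exists j; split => //; apply: ltn_trans jk _.
  by exists k.
have AP' k j x : (j < k)%N -> C j x -> A k x.
  elim: k => [//|k IH] /=.
  rewrite ltnS leq_eqVlt => /orP [/eqP ->|/IH h] Cj; by [right|left; apply: h].
have Am : ~ A m y by move=> /AP [j [jm Cj]]; apply: (mmin j jm).
have nD : nbhs y (C m `&` ~` A m).
  apply: open_nbhs_nbhs; split => //.
  apply: openI; first by case: (CP m).
  exact: closed_openC.
have H : \forall x \near y, g m x = (sval \o f) x.
  apply: filterS nD => x [Cmx nAx] /=.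
  have [_ [m' [Cm' mmin' eb']]] := fP x.
  rewrite eb'.
  have em : m' = m.
    case: (ltngtP m' m) => // h.
      by exfalso; apply: nAx; apply: (AP' m m' x h Cm').
    by exfalso; apply: (mmin' m h).
  by rewrite em.
rewrite /continuous_at /= eb.
apply: cvg_trans (near_eq_cvg H) _.
exact: (gP m).1.
Qed.
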